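(* There is a constant $c>0$ such that for all integers $n,m$ with $1\le m<n$ there is an instance $(\mathcal{I},\mathcal{T},p^0)$ of the Shape Reconfiguration Problem with $|\mathcal{I}|=|\mathcal{T}|=n$ and $|\mathcal{I}\setminus\mathcal{T}|=m$ (with both $\mathcal{I}$ and $\mathcal{T}$ simply connected) such that every valid sequence of legal agent actions solving it has length at least $c\,mn$. Concretely, one may take $\mathcal{I}=\{v_1,\dots,v_n\}$ and $\mathcal{T}=\{v_{m+1},\dots,v_{n+m}\}$ where $v_{i+1}=v_i+(0,2)$ (a straight line of nodes), with $p^0=v_n$.
   Context: Hybrid model. Let $G=(V,E)$ be the infinite triangular lattice with $V=\{(x,y)\in\mathbb{Z}^2 : x+y \text{ even}\}$, where the six neighbors of a node $v$ are $v+\vec d$ for $\vec d\in\{(0,-2),(1,-1),(1,1),(0,2),(-1,1),(-1,-1)\}$. A set $S\subseteq V$ is connected if $G[S]$ is connected, and simply connected if $V\setminus S$ is connected. A single agent and finitely many indistinguishable tiles occupy nodes; each node holds at most one tile; the agent occupies one node and carries at most one tile. A configuration $(\mathcal{C},p)$ ($\mathcal{C}$ = tiled nodes, $p$ = agent node) is connected if $\mathcal{C}$ is connected, or if the agent carries a tile and $\mathcal{C}\cup\{p\}$ is connected. In each time step the agent performs one action: move to an adjacent node, lift the tile at its node (if not carrying one), or place its carried tile at its node (if untiled); every resulting configuration must be connected. Shape Reconfiguration Problem: given connected $\mathcal{I},\mathcal{T}\subseteq V$ with $|\mathcal{I}|=|\mathcal{T}|=n$, $\mathcal{I}\cap\mathcal{T}$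 non-empty and connected, and $p^0\in\mathcal{I}$ (initial tiled set $\mathcal{I}$, agent not carrying a tile), a solution is a sequence of connected configurations, each obtained from the previous by one legal action, ending with tiled set exactly $\mathcal{T}$; its length is the number of actions. *)

(* Defs.v *)
From Stdlib Require Import ZArith List Reals.
Open Scope Z_scope.

(** Nodes of the triangular lattice: points (x,y) of Z^2 with x+y even. *)
Definition node : Type := (Z * Z)%type.
Definition inV (v : node) : Prop := Z.Even (fst v + snd v).

Definition adj (u v : node) : Prop :=
  let dx := fst v - fst u in
  let dy := snd v - snd u in
  (dx = 0 /\ dy = -2) \/ (dx = 1 /\ dy = -1) \/ (dx = 1 /\ dy = 1) \/
  (dx = 0 /\ dy = 2) \/ (dx = -1 /\ dy = 1) \/ (dx = -1 /\ dy = -1).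

Inductive path_in (S : node -> Prop) : node -> node -> Prop :=
| pin_refl : forall u, S u -> path_in S u u
| pin_step : forall u v w, S u -> adj u v -> path_in S v w -> path_in S u w.

Definition connected (S : node -> Prop) : Prop :=
  forall u v, S u -> S v -> path_in S u v.

Definition simply_connected (S : node -> Prop) : Prop :=
  connected (fun v => inV v /\ ~ S v).

Definition has_card (P : node -> Prop) (n : nat) : Prop :=
  exists l : list node, NoDup l /\ (forall x, In x l <-> P x) /\ length l = n.

Record config : Type := mkConfig {
  tiles : node -> Prop;
  agent : node;
  carrying : bool }.

Definition config_connected (c : config) : Prop :=
  connected (tiles c) \/
  (carrying c = true /\ connected (fun v => tiles c v \/ v = agent c)).

Definition legal_action (c c' : config) : Prop :=
  (adj (agent c) (agent c') /\ (forall v, tiles c' v <-> tiles c v) /\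
     carrying c' = carrying c)
  \/ (carrying c = false /\ tiles c (agent c) /\ agent c' = agent c /\
      carrying c' = true /\ (forall v, tiles c' v <-> (tiles c v /\ v <> agent c)))
  \/ (carrying c = true /\ ~ tiles c (agent c) /\ agent c' = agent c /\
      carrying c' = false /\ (forall v, tiles c' v <-> (tiles c v \/ v = agent c))).

Definition srp_instance (n : nat) (I T : node -> Prop) (p0 : node) : Prop :=
  (forall v, I v -> inV v) /\ (forall v, T v -> inV v) /\
  has_card I n /\ has_card T n /\ connected I /\ connected T /\
  (exists v, I v /\ T v) /\ connected (fun v => I v /\ T v) /\ I p0.

Definition solution (I T : node -> Prop) (p0 : node) (s : nat -> config) (k : nat)
  : Prop :=
  (forall v, tiles (s O) v <-> I v) /\ agent (s O) = p0 /\ carrying (s O) = false /\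
  (forall i, (i < k)%nat -> legal_action (s i) (s (S i)) /\ config_connected (s (S i))) /\
  (forall v, tiles (s k) v <-> T v).

(* Main.v *)
Require Import Defs.
From Stdlib Require Import ZArith Reals.
From Stdlib Require Import List Permutation Lia Lra.
Import ListNotations.
Open Scope Z_scope.

Lemma adj_sym u v : adj u v -> adj v u.
Proof. unfold adj; lia. Qed.

Lemma path_in_S S u v : path_in S u v -> S u /\ S v.
Proof. induction 1; intuition. Qed.

Lemma path_app S u v w : path_in S u v -> path_in S v w -> path_in S u w.
Proof. induction 1; intros; auto. eapply pin_step; eauto. Qed.

Lemma path_rev S u v : path_in S u v -> path_in S v u.
Proof.
  induction 1. apply pin_refl; auto.
  apply path_app with v; auto.
  destruct (path_in_S _ _ _ H1) as [Hv _].
  eapply pin_step; [exact Hv| apply adj_sym; exact H0| apply pin_refl; exact H].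
Qed.

Lemma path_eq S u v u' v' : u = u' -> v = v' -> path_in S u v -> path_in S u' v'.
Proof. intros -> ->; auto. Qed.

Lemma S_eq (S : node -> Prop) u v : S u -> u = v -> S v.
Proof. intros H ->; auto. Qed.

Lemma connected_hub S h : (forall u, S u -> path_in S u h) -> connected S.
Proof. intros H u v Hu Hv. apply path_app with h; auto. apply path_rev; auto. Qed.

Lemma path_ext (S S' : node -> Prop) u v : (forall x, S x -> S' x) -> path_in S u v -> path_in S' u v.
Proof. intros HS; induction 1. apply pin_refl; auto. eapply pin_step; eauto. Qed.

Lemma connected_ext (S S' : node -> Prop) : (forall v, S v <-> S' v) -> connected S -> connected S'.
Proof. intros H C u v Hu Hv. apply path_ext with S. intros; apply H; auto.
  apply C; apply H; auto. Qed.

Lemma vert S x : forall k y, (forall j, (j <= k)%nat -> S (x, y + 2*Z.of_nat j)) ->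
  path_in S (x,y) (x, y + 2*Z.of_nat k).
Proof.
  induction k; intros y H.
  - eapply path_eq; [| |apply pin_refl; apply (H 0%nat (le_n 0))]; f_equal; simpl; lia.
  - apply pin_step with (x, y+2).
    + apply (S_eq _ _ _ (H 0%nat ltac:(lia))). f_equal; lia.
    + unfold adj; simpl; lia.
    + eapply path_eq; [reflexivity| |apply (IHk (y+2))].
      * f_equal; lia.
      * intros j Hj. apply (S_eq _ _ _ (H (Datatypes.S j) ltac:(lia))). f_equal; lia.
Qed.

Lemma diag S (dx : Z) (Hdx : dx = 1 \/ dx = -1) : forall d x y,
  (forall j, (j <= d)%nat -> S (x + dx*Z.of_nat j, y - Z.of_nat j)) ->
  path_in S (x,y) (x + dx*Z.of_nat d, y - Z.of_nat d).
Proof.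
  induction d; intros x y H.
  - eapply path_eq; [| |apply pin_refl; apply (H 0%nat (le_n 0))]; f_equal; simpl; lia.
  - apply pin_step with (x+dx, y-1).
    + apply (S_eq _ _ _ (H 0%nat ltac:(lia))). f_equal; lia.
    + unfold adj; simpl; destruct Hdx; subst; lia.
    + eapply path_eq; [reflexivity| |apply (IHd (x+dx) (y-1))].
      * f_equal; lia.
      * intros j Hj. apply (S_eq _ _ _ (H (Datatypes.S j) ltac:(lia))). f_equal; lia.
Qed.

Lemma column S x : (forall y, Z.Even (x+y) -> S (x,y)) ->
  forall y1 y2, Z.Even (x+y1) -> Z.Even (y2 - y1) -> path_in S (x,y1) (x,y2).
Proof.
  intros HS y1 y2 [b Hb] [q Hq]. destruct (Z_le_gt_dec 0 q).
  - apply path_eq with (x,y1) (x, y1 + 2*Z.of_nat (Z.to_nat q)); [reflexivity| f_equal; lia|].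
    apply vert. intros j _. apply HS. exists (b + Z.of_nat j); lia.
  - apply path_rev.
    apply path_eq with (x,y2) (x, y2 + 2*Z.of_nat (Z.to_nat (-q))); [reflexivity| f_equal; lia|].
    apply vert. intros j _. apply HS. exists (b + q + Z.of_nat j); lia.
Qed.

Lemma region_pos S : (forall x y, 1 <= x -> Z.Even (x+y) -> S (x,y)) ->
  forall x y, 1 <= x -> Z.Even (x+y) -> path_in S (x,y) (1,1).
Proof.
  intros HS x y Hx He.
  apply path_app with (1, y - x + 1).
  - apply path_eq with (x,y) (x + (-1)*Z.of_nat (Z.to_nat (x-1)), y - Z.of_nat (Z.to_nat (x-1)));
      [reflexivity| f_equal; lia|].
    apply diag; [right; reflexivity|]. intros j Hj.
    destruct He as [b Hb]. apply HS. lia. exists (b - Z.of_nat j). lia.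
  - apply column. intros y' Hy'. apply HS; auto; lia.
    destruct He as [b Hb]. exists (b - x + 1). lia.
    destruct He as [b Hb]. exists (x - b). lia.
Qed.

Lemma region_neg S : (forall x y, x <= -1 -> Z.Even (x+y) -> S (x,y)) ->
  forall x y, x <= -1 -> Z.Even (x+y) -> path_in S (x,y) (-1,1).
Proof.
  intros HS x y Hx He.
  apply path_app with (-1, y + x + 1).
  - apply path_eq with (x,y) (x + 1*Z.of_nat (Z.to_nat (-1-x)), y - Z.of_nat (Z.to_nat (-1-x)));
      [reflexivity| f_equal; lia|].
    apply diag; [left; reflexivity|]. intros j Hj.
    destruct He as [b Hb]. apply HS. lia. exists b. lia.
  - apply column. intros y' Hy'. apply HS; auto; lia.
    destruct He as [b Hb]. exists b. lia.
    destruct He as [b Hb]. exists (- b). lia.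
Qed.

Definition fnode (i : nat) : node := (0, 2*Z.of_nat i).
Definition line (a len : nat) : list node := map fnode (seq a len).

Lemma in_line a len v : In v (line a len) <-> exists i, (a <= i < a + len)%nat /\ v = fnode i.
Proof.
  unfold line. rewrite in_map_iff. split; intros [i [H1 H2]]; exists i.
  - rewrite in_seq in H2. split; auto.
  - rewrite in_seq. split; auto.
Qed.

Lemma fnode_inj i j : fnode i = fnode j -> i = j.
Proof. intros H. assert (E : snd (fnode i) = snd (fnode j)) by (rewrite H; auto). unfold fnode in E; cbn [snd] in E. lia. Qed.

Lemma line_nodup a len : NoDup (line a len).
Proof. apply FinFun.Injective_map_NoDup. intros i j; apply fnode_inj. apply seq_NoDup. Qed.

Lemma line_length a len : length (line a len) = len.
Proof. unfold line; rewrite length_map, length_seq; auto. Qed.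

Lemma line_card a len : has_card (fun v => In v (line a len)) len.
Proof. exists (line a len). split; [apply line_nodup| split; [tauto| apply line_length]]. Qed.

Lemma line_conn a len : connected (fun v => In v (line a len)).
Proof.
  apply connected_hub with (0, 2*Z.of_nat a). intros v Hv.
  apply in_line in Hv as [i [Hi ->]]. apply path_rev. unfold fnode.
  apply path_eq with (0, 2*Z.of_nat a) (0, 2*Z.of_nat a + 2*Z.of_nat (i - a));
    [reflexivity| f_equal; lia|].
  apply vert. intros j Hj. apply in_line. exists (a + j)%nat. split; [lia| unfold fnode; f_equal; lia].
Qed.

Lemma in_line_fst a len v : In v (line a len) -> fst v = 0 /\ 2*Z.of_nat a <= snd v.
Proof. intros H; apply in_line in H as [i [Hi ->]]. unfold fnode; cbn [fst snd]. lia. Qed.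

Lemma line_sc a len : (1 <= a)%nat -> simply_connected (fun v => In v (line a len)).
Proof.
  intros Ha. unfold simply_connected. apply connected_hub with (1,1).
  assert (HC : forall x y, x <> 0 -> Z.Even (x+y) -> inV (x,y) /\ ~ In (x,y) (line a len)).
  { intros x y Hx He. split; [exact He|]. intro Hin. apply in_line_fst in Hin. simpl in Hin. lia. }
  intros [x y] [HV Hn]. unfold inV in HV; simpl in HV.
  destruct (Z_lt_le_dec 0 x) as [Hx|Hx].
  - apply region_pos; auto; [intros; apply HC; auto; lia | lia].
  - destruct (Z.eq_dec x 0) as [->|Hx0].
    + apply pin_step with (1, y+1).
      * split; auto.
      * unfold adj; simpl; lia.
      * destruct HV as [b Hb]. apply region_pos; [intros; apply HC; auto; lia | lia| exists (b+1); lia].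
    + apply path_app with (-1, 1).
      * apply region_neg; auto; [intros; apply HC; auto; lia | lia].
      * apply pin_step with (0,0).
        -- apply HC; [lia| exists 0; reflexivity].
        -- unfold adj; simpl; lia.
        -- apply pin_step with (1,1).
           ++ split; [exists 0; reflexivity|]. intro Hin. apply in_line_fst in Hin. cbn [fst snd] in Hin. lia.
           ++ unfold adj; simpl; lia.
           ++ apply pin_refl. apply HC; [lia| exists 1; reflexivity].
Qed.

Definition sumy (l : list node) : Z := fold_right (fun v acc => snd v + acc) 0 l.

Lemma sumy_app l1 l2 : sumy (l1 ++ l2) = sumy l1 + sumy l2.
Proof. induction l1; simpl; lia. Qed.

Lemma sumy_perm l l' : Permutation l l' -> sumy l = sumy l'.
Proof. induction 1; simpl; lia. Qed.

Lemma sumy_line len : forall a, sumy (line a len) = Z.of_nat len * (2*Z.of_nat a + Z.of_nat len - 1).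
Proof.
  induction len; intros a. reflexivity.
  change (line a (S len)) with (fnode a :: line (S a) len).
  change (sumy (fnode a :: line (S a) len)) with (snd (fnode a) + sumy (line (S a) len)).
  rewrite IHlen. unfold fnode; cbn [snd]. rewrite !Nat2Z.inj_succ. ring.
Qed.

Definition cnt (c : config) : nat := if carrying c then 1%nat else 0%nat.
Definition pot (c : config) (l : list node) : Z :=
  sumy l + (if carrying c then snd (agent c) else 0).
Definition Inv (n : nat) (c : config) (l : list node) : Prop :=
  NoDup l /\ (forall x, In x l <-> tiles c x) /\ (length l + cnt c = n)%nat.

Lemma step_lemma n c c' l : Inv n c l -> legal_action c c' ->
  exists l', Inv n c' l' /\ pot c' l' <= pot c l + 2.
Proof.
  intros [Hnd [Hin Hlen]] [[Hadj [Ht Hc]] | [[Hcf [Hat [Hag [Hct Ht]]]] | [Hct [Hnt [Hag [Hcf Ht]]]]]].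
  - exists l. split; [split; [auto| split]|].
    + intros x. rewrite Hin, Ht. tauto.
    + unfold cnt in *. rewrite Hc. auto.
    + unfold pot. rewrite Hc. destruct (carrying c); unfold adj in Hadj; lia.
  - assert (Ha : In (agent c) l) by (apply Hin; auto).
    destruct (in_split _ _ Ha) as [l1 [l2 ->]].
    exists (l1 ++ l2). split; [split; [eapply NoDup_remove_1; eauto| split]|].
    + intros x. rewrite Ht, <- Hin. pose proof (NoDup_remove_2 _ _ _ Hnd) as Hn2.
      rewrite !in_app_iff. simpl. split.
      * intros H. split; [tauto|]. intros ->. apply Hn2. apply in_app_iff; auto.
      * intros [[H|[H|H]] Hne]; auto. congruence.
    + unfold cnt in *. rewrite Hct, Hcf in *. rewrite length_app in *. simpl in *. lia.
    + unfold pot. rewrite Hct, Hcf, Hag, !sumy_app. simpl. lia.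
  - exists (agent c :: l). split; [split; [constructor; [rewrite Hin; auto| auto]| split]|].
    + intros x. rewrite Ht. simpl. rewrite Hin. intuition.
    + unfold cnt in *. rewrite Hct, Hcf in *. simpl. lia.
    + unfold pot. rewrite Hct, Hcf. simpl. lia.
Qed.

Lemma iter n I T p0 s k lI : NoDup lI -> length lI = n -> (forall x, In x lI <-> I x) ->
  solution I T p0 s k -> forall i, (i <= k)%nat ->
  exists l, Inv n (s i) l /\ pot (s i) l <= sumy lI + 2*Z.of_nat i.
Proof.
  intros Hnd Hlen HI [H0 [Ha0 [Hc0 [Hst Hk]]]]. induction i; intros Hi.
  - exists lI. split; [split; [auto| split]|].
    + intros x; rewrite HI, H0; tauto.
    + unfold cnt; rewrite Hc0; lia.
    + unfold pot; rewrite Hc0; simpl; lia.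
  - destruct (IHi ltac:(lia)) as [l [Hinv Hp]].
    destruct (Hst i ltac:(lia)) as [Hleg _].
    destruct (step_lemma _ _ _ _ Hinv Hleg) as [l' [Hinv' Hp']].
    exists l'. split; auto. lia.
Qed.

Theorem mainTheorem2 :
  exists c : R, (0 < c)%R /\
  forall n m : nat, (1 <= m)%nat -> (m < n)%nat ->
  exists (I T : node -> Prop) (p0 : node),
    srp_instance n I T p0 /\
    has_card (fun v => I v /\ ~ T v) m /\
    simply_connected I /\ simply_connected T /\
    forall (s : nat -> config) (k : nat),
      solution I T p0 s k -> (c * INR m * INR n <= INR k)%R.
Proof.
  exists 1%R. split; [lra|]. intros n m Hm Hmn.
  exists (fun v => In v (line 1 n)), (fun v => In v (line (S m) n)), (0, 2).
  split; [|split; [|split; [|split]]].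
  - split; [|split; [|split; [|split; [|split; [|split; [|split; [|split]]]]]]].
    + intros v Hv. apply in_line in Hv as [i [_ ->]]. exists (Z.of_nat i). unfold fnode; cbn [fst snd]. lia.
    + intros v Hv. apply in_line in Hv as [i [_ ->]]. exists (Z.of_nat i). unfold fnode; cbn [fst snd]. lia.
    + apply line_card.
    + apply line_card.
    + apply line_conn.
    + apply line_conn.
    + exists (fnode (S m)). split; apply in_line; exists (S m); split; auto; lia.
    + apply connected_ext with (fun v => In v (line (S m) (n - m))); [|apply line_conn].
      intros v. rewrite !in_line. split.
      * intros [i [Hi ->]]. split; exists i; split; auto; lia.
      * intros [[i [Hi ->]] [j [Hj Hij]]]. apply fnode_inj in Hij. exists i. split; auto; lia.
    + apply in_line. exists 1%nat. split; [lia| reflexivity].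
  - exists (line 1 m). split; [apply line_nodup| split; [|apply line_length]].
    intros v. rewrite !in_line. split.
    + intros [i [Hi ->]]. split; [exists i; split; auto; lia|].
      intros [j [Hj Hij]]. apply fnode_inj in Hij. lia.
    + intros [[i [Hi ->]] Hn]. exists i. split; auto.
      destruct (le_lt_dec (S m) i); [|lia]. exfalso. apply Hn. exists i. split; auto; lia.
  - apply line_sc; lia.
  - apply line_sc; lia.
  - intros s k Hsol.
    destruct (iter n _ _ _ s k (line 1 n) (line_nodup _ _) (line_length _ _)
                (fun x => iff_refl _) Hsol k (le_n k)) as [l [[Hnd [Hin Hlen]] Hp]].
    destruct Hsol as [_ [_ [_ [_ Hk]]]].
    assert (Hperm : Permutation l (line (S m) n)).
    { apply NoDup_Permutation; auto. apply line_nodup. intros x. rewrite Hin, Hk. tauto. }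
    pose proof (Permutation_length Hperm) as HL. rewrite line_length in HL.
    assert (Hcar : carrying (s k) = false).
    { unfold cnt in Hlen. destruct (carrying (s k)); auto. lia. }
    unfold pot in Hp. rewrite Hcar, (sumy_perm _ _ Hperm), !sumy_line in Hp.
    assert (Hmn2 : Z.of_nat m * Z.of_nat n <= Z.of_nat k) by (rewrite Nat2Z.inj_succ in Hp; nia).
    assert (Hnat : (m * n <= k)%nat) by lia.
    rewrite Rmult_1_l, <- mult_INR. apply le_INR. exact Hnat.
Qed.
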